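(* Let $v_1,v_2\in\mathbb{R}^n$, $p\geq 2$, $\delta>0$, and $$J=\int_0^1\int_0^1|v_1-(t-s\delta)v_2|^{p-2}\,ds\,dt.$$ Then there exist constants $C_p>0$ and $\delta_0>0$, both depending only on $p$, such that $$J\geq C_p\left(\max\{|v_1|,|v_2|\}\right)^{p-2}\qquad\text{for all }0<\delta\leq\delta_0.$$ *)

(* Defs.v *)
From HB Require Import structures.
From mathcomp Require Import all_boot all_order all_algebra.
From mathcomp Require Import all_classical all_reals all_analysis.
Set Implicit Arguments. Unset Strict Implicit. Unset Printing Implicit Defensive.
Import Order.TTheory GRing.Theory Num.Theory.
Import numFieldNormedType.Exports.
Local Open Scope classical_set_scope.
Local Open Scope ring_scope.

Definition enorm (R : realType) (n : nat) (v : 'rV[R]_n) : R :=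
  Num.sqrt (\sum_(i < n) v ord0 i ^+ 2).

Definition Jint (R : realType) (n : nat) (p delta : R) (v1 v2 : 'rV[R]_n) : \bar R :=
  (\int[@lebesgue_measure R]_(t in `[0%R, 1%R])
     \int[@lebesgue_measure R]_(s in `[0%R, 1%R])
        ((enorm (v1 - (t - s * delta) *: v2)) `^ (p - 2))%:E)%E.

(* Main.v *)
Require Import Defs.
From HB Require Import structures.
From mathcomp Require Import all_boot all_order all_algebra.
From mathcomp Require Import all_classical all_reals all_analysis.
From mathcomp Require Import lra ring.
Import Order.TTheory GRing.Theory Num.Theory.
Import numFieldNormedType.Exports.
Local Open Scope ring_scope.

Section Key.
Variable R : realType.

Definition S2 {n} (v : 'rV[R]_n) := \sum_(i < n) v ord0 i ^+ 2.

Lemma S2_ge0 {n} (v : 'rV[R]_n) : 0 <= S2 v.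
Proof. by apply: sumr_ge0 => i _; rewrite sqr_ge0. Qed.

Lemma S2_diff {n} (v1 v2 : 'rV[R]_n) u u' :
  (u - u') ^+ 2 * S2 v2 <= 2 * S2 (v1 - u *: v2) + 2 * S2 (v1 - u' *: v2).
Proof.
rewrite /S2 !mulr_sumr -big_split /=; apply: ler_sum => i _.
rewrite !mxE; set x := v1 ord0 i; set y := v2 ord0 i.
have := sqr_ge0 (2*x - (u+u')*y); nra.
Qed.

Lemma S2_v1 {n} (v1 v2 : 'rV[R]_n) u :
  S2 v1 <= 2 * S2 (v1 - u *: v2) + 2 * u ^+ 2 * S2 v2.
Proof.
rewrite /S2 !mulr_sumr -big_split /=; apply: ler_sum => i _.
rewrite !mxE; set x := v1 ord0 i; set y := v2 ord0 i.
have := sqr_ge0 (x - 2 * u * y); nra.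
Qed.

Lemma sqrt_lb (z h : R) : 0 <= z -> z ^+ 2 <= h -> z <= Num.sqrt h.
Proof.
move=> z0 zh; rewrite -(ger0_norm z0) -sqrtr_sqr; exact: ler_wsqrtr.
Qed.

Lemma key {n} (v1 v2 : 'rV[R]_n) :
  let M := Num.max (enorm v1) (enorm v2) in
  (forall u, -(1/8) <= u <= 1/8 -> M / 8 <= enorm (v1 - u *: v2)) \/
  (forall u, 3/4 <= u <= 1 -> M / 8 <= enorm (v1 - u *: v2)).
Proof.
move=> M.
have a0 := S2_ge0 v1; have b0 := S2_ge0 v2.
have M0 : 0 <= M by rewrite /M le_max sqrtr_ge0.
have suff1 u : M ^+ 2 / 64 <= S2 (v1 - u *: v2) -> M / 8 <= enorm (v1 - u *: v2).
  move=> h; apply: sqrt_lb; first lra.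
  rewrite expr_div_n; have -> : (8:R) ^+ 2 = 64 by rewrite -natrX. done.
have [[Ma ba]|[Mb ab]] : (M ^+ 2 = S2 v1 /\ S2 v2 <= S2 v1) \/ (M ^+ 2 = S2 v2 /\ S2 v1 <= S2 v2).
  rewrite /M /enorm -/(S2 v1) -/(S2 v2).
  have [h|h] := leP (Num.sqrt (S2 v1)) (Num.sqrt (S2 v2)).
  - right; rewrite sqr_sqrtr //; split => //; by rewrite -ler_sqrt.
  - left; rewrite sqr_sqrtr //; split => //; rewrite -ler_sqrt //; exact: ltW.
- left => u /andP[u1 u2]; apply: suff1; rewrite Ma.
  have := S2_v1 v1 v2 u; have := S2_ge0 (v1 - u *: v2).
  have : u ^+ 2 <= 1/64 by nra.
  move=> hu hh hv. nra.
-
  have [H|H] := pselect (forall u, -(1/8) <= u <= 1/8 -> S2 v2 / 64 <= S2 (v1 - u *: v2)).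
    by left => u hu; apply: suff1; rewrite Mb; exact: H.
  right; move: H => /existsNP [u0 /not_implyP [/andP[u1 u2] /negP]].
  rewrite -ltNge => h0 u /andP[u3 u4]; apply: suff1; rewrite Mb.
  have := S2_diff v1 v2 u0 u; have := S2_ge0 (v1 - u *: v2).
  have : 25/64 <= (u0 - u) ^+ 2 by nra.
  move=> hu hh hv. nra.
Qed.
End Key.
Local Open Scope classical_set_scope.
Section Int.
Variable R : realType.

Lemma le_integral_nm (D : set R) (f g : R -> \bar R) :
  (forall x, D x -> (0 <= f x)%E) -> (forall x, D x -> (f x <= g x)%E) ->
  (\int[@lebesgue_measure R]_(x in D) f x <= \int[@lebesgue_measure R]_(x in D) g x)%E.
Proof.
move=> f0 fg.
have g0 x : D x -> (0 <= g x)%E by move=> Dx; apply: le_trans (f0 _ Dx) (fg _ Dx).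
rewrite !ge0_integralE //; apply: ereal_sup_le => _ [h hf <-]; exists h => // x.
apply: le_trans (hf x) _; rewrite /patch; case: ifPn => // /set_mem Dx; exact: fg.
Qed.

Lemma Jlb {n} (p delta : R) (v1 v2 : 'rV[R]_n) (a c : R) :
  0 <= a -> a + 1/8 <= 1 -> 0 <= c ->
  (forall t s, a <= t <= a + 1/8 -> 0 <= s <= 1 ->
     c <= (enorm (v1 - (t - s * delta) *: v2)) `^ (p - 2)) ->
  ((c / 8)%:E <= Jint p delta v1 v2)%E.
Proof.
move=> a0 a1 c0 H.
pose T : set R := `[a, a + 1/8].
have mT : measurable T by exact: measurable_itv.
apply: (@le_trans _ _ (\int[@lebesgue_measure R]_(t in `[0%R, 1%R]) (c%:E * (\1_T t)%:E))%E).
  rewrite ge0_integralZl //; last first.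
    by apply/measurable_realfun.measurable_EFinP; exact: measurable_realfun.measurable_indic.
  rewrite integral_indic // setIidl; last first.
    by move=> x; rewrite /T /= !in_itv /= => /andP[h1 h2]; apply/andP; split; lra.
  have LT : (@lebesgue_measure R T = (1/8)%:E)%E.
    rewrite /T lebesgue_measure_itv /=.
    have -> : (a%:E < (a + 1/8)%:E)%E by rewrite lte_fin; lra.
    by rewrite -EFinD; congr EFin; lra.
  set X := (X in (_ <= _ * X)%E).
  have -> : X = (1/8)%:E%E by exact: LT.
  by rewrite -EFinM lee_fin; lra.
apply: le_integral_nm.
  by move=> x _; rewrite lee_fin indicE mulr_ge0 //; case: (x \in T).
move=> t t01; rewrite indicE; have [tT|tT] := boolP (t \in T).
  rewrite mule1.
  have -> : (c%:E = \int[@lebesgue_measure R]_(s in `[0%R, 1%R]) (cst c%:E) s)%E.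
    have L1 : (@lebesgue_measure R `[0%R, 1%R] = 1%:E)%E.
      rewrite lebesgue_measure_itv /=.
      have -> : ((0:R)%:E < (1:R)%:E)%E by rewrite lte_fin; lra.
      by rewrite -EFinD subr0.
    rewrite integral_cst //; set X := (X in (_ = _ * X)%E).
    have -> : X = 1%:E%E by exact: L1.
    by rewrite mule1.
  apply: le_integral_nm => s hs; first by rewrite lee_fin.
  rewrite lee_fin; apply: H.
    by move: tT; rewrite /T inE /= in_itv.
  by move: hs; rewrite /= in_itv.
rewrite mule0; apply: integral_ge0 => s _; rewrite lee_fin; exact: powR_ge0.
Qed.
End Int.

Theorem lemma3p2 (R : realType) (p : R) (hp : 2 <= p) :
  exists C : R, exists delta0 : R, 0 < C /\ 0 < delta0 /\
    forall (n : nat) (v1 v2 : 'rV[R]_n) (delta : R),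
      0 < delta -> delta <= delta0 ->
      ((C * (Num.max (enorm v1) (enorm v2)) `^ (p - 2))%:E <= Jint p delta v1 v2)%E.
Proof.
have r0 : 0 <= p - 2 by lra.
exists ((1/8) * (1/8) `^ (p - 2)), (1/8); split.
  apply: mulr_gt0; first lra.
  by rewrite powR_gt0 //; lra.
split; first lra.
move=> n v1 v2 delta d0 d1.
set M := Num.max (enorm v1) (enorm v2).
have M0 : 0 <= M by rewrite /M le_max sqrtr_ge0.
set c := (M / 8) `^ (p - 2).
have c0 : 0 <= c by exact: powR_ge0.
have -> : (1/8) * (1/8) `^ (p - 2) * M `^ (p - 2) = c / 8.
  rewrite /c; have -> : M / 8 = (1/8) * M by rewrite mulrC div1r.
  rewrite (powRM _ _ M0); last lra.
  ring.
have pw x : M / 8 <= x -> c <= x `^ (p - 2).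
  move=> hx; apply: (ge0_ler_powR r0) => //; rewrite nnegrE //.
    by apply: divr_ge0 => //; lra.
  apply: le_trans hx; apply: divr_ge0 => //; lra.
have [H|H] := @key R n v1 v2.
- apply: (@Jlb R n p delta v1 v2 0 c) => //; try lra.
  move=> t s /andP[t1 t2] /andP[s1 s2]; apply: pw; apply: H.
  have h1 : 0 <= s * delta by apply: mulr_ge0 => //; lra.
  have h2 : s * delta <= 1/8.
    apply: le_trans d1; rewrite -[X in _ <= X]mul1r; apply: ler_wpM2r; lra.
  apply/andP; split; lra.
- apply: (@Jlb R n p delta v1 v2 (7/8) c) => //; try lra.
  move=> t s /andP[t1 t2] /andP[s1 s2]; apply: pw; apply: H.
  have h1 : 0 <= s * delta by apply: mulr_ge0 => //; lra.
  have h2 : s * delta <= 1/8.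
    apply: le_trans d1; rewrite -[X in _ <= X]mul1r; apply: ler_wpM2r; lra.
  apply/andP; split; lra.
Qed.
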